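(* Let $\alpha,\beta,\gamma\in\mathbb{Z}[i]$ satisfy $\alpha^2+\beta^2+\gamma^2=0$, $\alpha\beta\gamma\neq0$, $\gcd(\alpha,\beta,\gamma)\in U$, and suppose $\alpha=i^m\alpha'$, $\beta=i^n(1+i)^{2+k}\beta'$, $\gamma=i^l\gamma'$ where $m,n,l\in\{0,1\}$, $k\ge0$ is an integer, and $\alpha',\beta',\gamma'\in O^I$. Then $m+l\equiv1\pmod 2$.
   Context: $\mathbb{Z}[i]$ is the ring of Gaussian integers, $U=\{1,-1,i,-i\}$ its unit group; $R(\alpha),I(\alpha)$ are real and imaginary parts. $O=\{\alpha: R(\alpha)+I(\alpha)\equiv1\pmod 2\}$, $O^I=\{\alpha\in O: R(\alpha)\equiv 1\pmod 4\}$. *)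

(* Defs.v *)
From Stdlib Require Import ZArith Arith.
Open Scope Z_scope.

Record GI : Type := mkGI { re : Z ; im : Z }.

Definition gzero : GI := mkGI 0 0.
Definition gone  : GI := mkGI 1 0.
Definition gI    : GI := mkGI 0 1.
Definition gadd (a b : GI) : GI := mkGI (re a + re b) (im a + im b).
Definition gopp (a : GI) : GI := mkGI (- re a) (- im a).
Definition gmul (a b : GI) : GI :=
  mkGI (re a * re b - im a * im b) (re a * im b + im a * re b).
Fixpoint gpow (a : GI) (n : nat) : GI :=
  match n with O => gone | S n' => gmul a (gpow a n') end.

Definition gdvd (d a : GI) : Prop := exists q : GI, a = gmul d q.

Definition gunit (u : GI) : Prop :=
  u = gone \/ u = gopp gone \/ u = gI \/ u = gopp gI.

Definition gcd3_unit (a b c : GI) : Prop :=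
  forall d : GI, gdvd d a -> gdvd d b -> gdvd d c -> gunit d.

Definition inO (a : GI) : Prop := (re a + im a) mod 2 = 1.
Definition inOI (a : GI) : Prop := inO a /\ re a mod 4 = 1.

(* Main.v *)
Require Import Defs.
From Stdlib Require Import ZArith Arith Lia.
Open Scope Z_scope.

Lemma mul2l (x y : Z) (z : GI) :
  gmul (mkGI (2*x) (2*y)) z = mkGI (2*(x*re z - y*im z)) (2*(x*im z + y*re z)).
Proof. unfold gmul; cbn [re im]; f_equal; ring. Qed.

Lemma mul2r (x y : Z) (z : GI) :
  gmul z (mkGI (2*x) (2*y)) = mkGI (2*(re z*x - im z*y)) (2*(re z*y + im z*x)).
Proof. unfold gmul; cbn [re im]; f_equal; ring. Qed.

Lemma b_even n k b' : exists u v,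
  gmul (gmul (gpow gI n) (gpow (mkGI 1 1) (2+k))) b' = mkGI (2*u) (2*v).
Proof.
  assert (E : gpow (mkGI 1 1) (2+k) = mkGI (2*(- im (gpow (mkGI 1 1) k))) (2*re (gpow (mkGI 1 1) k))).
  { cbn [gpow Nat.add]. destruct (gpow (mkGI 1 1) k) as [p q]. unfold gmul; cbn [re im]; f_equal; ring. }
  rewrite E, mul2r, mul2l. eauto.
Qed.

Lemma OI_dec (a : GI) : inOI a -> exists s t, a = mkGI (4*s+1) (2*t).
Proof.
  destruct a as [x y]; unfold inOI, inO; cbn [re im]. intros [H1 H2].
  exists (x / 4), (y / 2).
  pose proof (Z.div_mod x 4 ltac:(lia)). pose proof (Z.div_mod (x+y) 2 ltac:(lia)).
  pose proof (Z.div_mod y 2 ltac:(lia)). pose proof (Z.mod_pos_bound y 2 ltac:(lia)).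
  apply (f_equal2 mkGI); lia.
Qed.

Theorem lemma4p2 (a b c a' b' c' : GI) (m n l k : nat) :
  gadd (gadd (gmul a a) (gmul b b)) (gmul c c) = gzero ->
  gmul (gmul a b) c <> gzero ->
  gcd3_unit a b c ->
  (m <= 1)%nat -> (n <= 1)%nat -> (l <= 1)%nat ->
  a = gmul (gpow gI m) a' ->
  b = gmul (gmul (gpow gI n) (gpow (mkGI 1 1) (2 + k))) b' ->
  c = gmul (gpow gI l) c' ->
  inOI a' -> inOI b' -> inOI c' ->
  Nat.modulo (m + l) 2 = 1%nat.
Proof.
  intros H _ _ Hm _ Hl Ha Hb Hc Oa _ Oc.
  destruct (b_even n k b') as [u [v Ev]]. rewrite Ev in Hb. subst b.
  destruct (OI_dec _ Oa) as [s1 [t1 E1]]. destruct (OI_dec _ Oc) as [s3 [t3 E3]].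
  subst a' c'. subst a c.
  apply (f_equal re) in H.
  destruct m as [|[|m]]; [| |lia]; destruct l as [|[|l]]; try lia; try reflexivity;
  cbn [gpow gmul gadd re im gI gone gzero] in H; exfalso.
  - revert H; match goal with |- ?L = 0 -> _ =>
      assert (E : L = 4*(4*s1*s1 + 2*s1 - t1*t1 + u*u - v*v + 4*s3*s3 + 2*s3 - t3*t3) + 2) by ring end; lia.
  - revert H; match goal with |- ?L = 0 -> _ =>
      assert (E : L = -(4*(4*s1*s1 + 2*s1 - t1*t1 - u*u + v*v + 4*s3*s3 + 2*s3 - t3*t3) + 2)) by ring end; lia.
Qed.
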